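(* If $\lambda\equiv 2\pmod 4$, $v=\frac{2nk}{\lambda}+t\equiv 2\pmod 4$ and $t$ is odd, then a ${}^\lambda\mathrm{H}_t(m,n;s,k)$ does not exist.
   Context: Let $m,n,s,k,\lambda,t$ be positive integers with $t$ dividing $\frac{2nk}{\lambda}$, let $v=\frac{2nk}{\lambda}+t$ and let $J$ be the subgroup of $\mathbb{Z}_v$ of order $t$. A $\lambda$-fold Heffter array ${}^\lambda\mathrm{H}_t(m,n;s,k)$ is an $m\times n$ partially filled array with entries in $\mathbb{Z}_v$ such that: (a) each row has exactly $s$ and each column exactly $k$ filled cells; (b) the multiset $\{\pm x: x$ an entry of a filled cell$\}$ (counted over all filled cells) contains each element of $\mathbb{Z}_v\setminus J$ exactly $\lambda$ times and no element of $J$; (c) every row and every column sums to $0$ in $\mathbb{Z}_v$. *)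

(* Defs.v *)
From HB Require Import structures.
From mathcomp Require Import all_boot all_order all_algebra.
Set Implicit Arguments. Unset Strict Implicit. Unset Printing Implicit Defensive.
Import GRing.Theory.
Local Open Scope ring_scope.

Definition heffter_v (n k lam t : nat) : nat := ((2 * n * k) %/ lam + t)%N.

(* An m x n partially filled array with entries in Z_v: None = empty cell. *)
Definition heffter_arr (m n k lam t : nat) :=
  'M[option 'Z_(heffter_v n k lam t)]_(m, n).

(* J = subgroup of Z_v of order t = multiples of v/t (t divides v). *)
Definition in_J (v t : nat) (y : 'Z_v) : bool := ((v %/ t) %| (y : nat))%N.

Definition is_lambda_heffter (m n s k lam t : nat)
    (A : heffter_arr m n k lam t) : Prop :=
  let v := heffter_v n k lam t in
  (forall i : 'I_m, #|[set j : 'I_n | A i j != None]| = s) /\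
  (forall j : 'I_n, #|[set i : 'I_m | A i j != None]| = k) /\
  (* (b) the multiset {+-x : x entry} covers Z_v \ J exactly lam times, J never *)
  (forall y : 'Z_v,
     (#|[set p : 'I_m * 'I_n | A p.1 p.2 == Some y]|
      + #|[set p : 'I_m * 'I_n | A p.1 p.2 == Some (- y)]|)%N
     = (if in_J t y then 0 else lam)%N) /\
  (forall i : 'I_m, \sum_(j < n) odflt 0 (A i j) = 0) /\
  (forall j : 'I_n, \sum_(i < m) odflt 0 (A i j) = 0).

Definition lambda_heffter_exists (m n s k lam t : nat) : Prop :=
  exists A : heffter_arr m n k lam t, is_lambda_heffter s A.

(* Main.v *)
Require Import Defs.
From mathcomp Require Import all_boot all_order all_algebra.
From mathcomp Require Import zify.

Lemma val_sumZ (v : nat) (T : finType) (G : T -> 'Z_v) :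
  (1 < v)%N -> ((\sum_x G x)%R : 'Z_v) = ((\sum_x (G x : nat)) %% v)%N :> nat.
Proof.
move=> hv; have Hc := Zp_cast hv.
apply: (big_rec2 (fun (a : 'Z_v) b => (a : nat) = b %% v)%N).
  by rewrite /= mod0n.
move=> i a b _ H. rewrite /= H; move: (nat_of_ord (G i)) => g. by rewrite Hc modnDmr.
Qed.

Lemma odd_count k : (\sum_(0 <= i < k.*2 | odd i) 1 = k)%N.
Proof.
elim: k => [|k IH]; first by rewrite big_nil.
rewrite doubleS big_mkcond /= !big_nat_recr //= -big_mkcond IH odd_double /=. by rewrite addn0 addn1.
Qed.

Lemma card_set_sum (T : finType) (P : pred T) : #|[set x | P x]| = (\sum_x P x)%N.
Proof.
rewrite -sum1_card big_mkcond /=; apply: eq_bigr => x _.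
by rewrite inE; case: (P x).
Qed.
Import GRing.Theory.
Lemma core (v lam t : nat) (T : finType) (F : T -> option 'Z_v) :
 (v %% 4 = 2)%N -> (lam %% 4 = 2)%N -> odd t -> (t %| v)%N ->
 (forall y : 'Z_v, (#|[set x | F x == Some y]| + #|[set x | F x == Some (- y)%R]|)%N
     = (if in_J t y then 0 else lam)%N) ->
 (\sum_x odflt 0%R (F x))%R = 0%R -> False.
Proof.
move=> hv4 hl4 ot tv HF Hsum.
have hv : (1 < v)%N by lia.
have Hc := Zp_cast hv.
have ov : odd v = false.
  have : (v %% 2 = 0)%N by lia.
  by rewrite modn2; case: (odd v).
set N := fun y : 'Z_v => #|[set x | F x == Some y]|.
have HnJ : forall y : 'Z_v, odd y -> ~~ in_J t y.
  move=> y oy; apply/negP => /dvdnP [c Hy].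
  have e : v = (v %/ t * t)%N by rewrite divnK.
  have : odd (v %/ t) = false.
    apply/negP => o; move: ov; by rewrite e oddM o ot.
  by move=> o; move: oy; rewrite Hy oddM o andbF.
have Hneg : forall y : 'Z_v, odd ((- y)%R : 'Z_v) = odd y.
  move=> y; case: (eqVneq y 0%R) => [->|ny]; first by rewrite oppr0.
  have yp : (0 < (y : nat))%N by rewrite lt0n; apply: contra ny => /eqP h; apply/eqP/val_inj.
  have yl : ((y : nat) < v)%N by rewrite -{2}Hc ltn_ord.
  rewrite /=; move: yp yl; move: (nat_of_ord y) => yn yp yl.
  rewrite Hc modn_small; last by lia.
  by rewrite oddB ?ov //; lia.
have H2 : (\sum_(y : 'Z_v | odd y) (N y + N (- y)%R) = lam * v./2)%N.
  rewrite (eq_bigr (fun _ => lam * 1)%N); last first.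
    by move=> y oy; rewrite /N HF (negbTE (HnJ y oy)) muln1.
  rewrite -big_distrr /=; congr (_ * _)%N.
  rewrite -(big_mkord (fun i => odd i) (fun _ => 1%N)) Hc.
  by rewrite -{1}(odd_double_half v) ov add0n odd_count.
have H3 : (\sum_(y : 'Z_v | odd y) N (- y)%R = \sum_(y : 'Z_v | odd y) N y)%N.
  rewrite (reindex_inj (@oppr_inj _)) /=; apply: eq_big => y; first by rewrite Hneg.
  by rewrite opprK.
set S := (\sum_(y : 'Z_v | odd y) N y)%N.
have HS2 : (S + S = lam * v./2)%N by rewrite -H2 big_split /= H3.
have oS : odd S.
  have el := divn_eq lam 4; have ev := divn_eq v 4.
  set a := (lam %/ 4)%N in el; set b := (v %/ 4)%N in ev.
  have eh : v./2 = (2 * b + 1)%N.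
    have e2 : v = (v./2).*2 by rewrite -{1}(odd_double_half v) ov.
    move: e2; rewrite -muln2; move: (v./2) => h; lia.
  rewrite eh in HS2.
  have -> : S = ((2 * a + 1) * (2 * b + 1))%N by nia.
  rewrite oddM !oddD; by case: (odd a); case: (odd b).
have X := @val_sumZ _ _ (fun x => odflt 0%R (F x)) hv.
rewrite /= Hsum in X.
have dv : (v %| \sum_x nat_of_ord (odflt 0%R (F x)))%N by rewrite /dvdn -X.
have d2 : (2 %| v)%N.
  apply/dvdnP; exists (v./2); by rewrite muln2 -{1}(odd_double_half v) ov.
have := dvdn_trans d2 dv; rewrite /dvdn -modn_summ.
have -> : (\sum_x (nat_of_ord (odflt 0%R (F x)) %% 2) = S)%N.
  transitivity (\sum_x \sum_(y : 'Z_v | odd y) nat_of_bool (F x == Some y))%N.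
    apply: eq_bigr => x _; rewrite modn2.
    case: (F x) => [z|] /=; last by rewrite big1.
    case oz: (odd z).
      rewrite (bigD1 z) //= eqxx big1 // => y /andP[_ ny].
      by rewrite (inj_eq (@Some_inj _)) eq_sym (negbTE ny).
    rewrite big1 // => y oy; rewrite (inj_eq (@Some_inj _)).
    case: eqP => // ezy; by move: oz; rewrite ezy oy.
  rewrite exchange_big /=; apply: eq_bigr => y _.
  by rewrite /N card_set_sum.
by rewrite modn2 oS.
Qed.

Theorem proposition4p2 (m n s k lam t : nat) :
  (0 < m)%N -> (0 < n)%N -> (0 < s)%N -> (0 < k)%N -> (0 < lam)%N -> (0 < t)%N ->
  (lam %| 2 * n * k)%N -> (t %| (2 * n * k) %/ lam)%N ->
  (lam %% 4 = 2)%N -> (heffter_v n k lam t %% 4 = 2)%N -> odd t ->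
  ~ lambda_heffter_exists m n s k lam t.
Proof.
move=> hm hn hs hk hl ht dl dt hl4 hv4 ot [A [_ [_ [HF [Hrow _]]]]].
apply: (@core (heffter_v n k lam t) lam t _ (fun p : 'I_m * 'I_n => A p.1 p.2) hv4 hl4 ot _ HF).
  by rewrite /heffter_v dvdn_add.
rewrite -(pair_bigA _ (fun i j => odflt 0%R (A i j))) /=.
by rewrite big1.
Qed.
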